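(* Let $A$ be a finite set of alternatives with $|A|\ge 3$, let $N=\{1,\dots,n\}$ with $n\ge 2$, and let $\mathbb{D}$ be a minimally rich domain of linear orders over $A$ that is connected with two distinct neighbours. If $f:\mathbb{D}^n\to A$ is unanimous, tops-only and locally strategy-proof, then $f$ satisfies dictatorship.
   Context: A domain is a set $\mathbb{D}$ of linear orders (strict preferences) over $A$; a preference profile is $P=(P_1,\dots,P_n)\in\mathbb{D}^n$. For a linear order $P_i$, $r_k(P_i)$ is its $k$-th ranked alternative. $\mathbb{D}$ is minimally rich if every $a\in A$ is ranked first in some $P_i\in\mathbb{D}$. Two linear orders $P_i,P_i'$ are adjacent ($P_i\sim P_i'$) if $P_i'$ is obtained from $P_i$ by swapping two consecutively ranked alternatives and leaving all other ranks unchanged. A social choice function (scf) is a map $f:\mathbb{D}^n\to A$. It is unanimous if $f(P)=a$ whenever every voter ranks $a$ first. It is locally strategy-proof if there is no voter $i$, profile $P$, and $P_i'\in\mathbb{D}$ with $P_i'\sim P_i$ such that $f(P_i',P_{-i})\,P_i\,f(P_i,P_{-i})$. It is tops-only if $f(P)=f(P')$ whenever $r_1(P_i)=r_1(P_i')$ for all $i$. It satisfies dictatorship if there is a voter $i$ with $f(P)=r_1(P_i)$ for all $P\in\mathbb{D}^n$. A path in $\mathbb{D}$ is a sequence of distinct preferences in $\mathbb{D}$ in which consecutive ones are adjacent; $\mathbb{D}$ is connected if any two of its preferences are joined by a path in $\mathbb{D}$. For $\bar{\mathbb{D}}\subseteq\mathbb{D}$, a neighbour of $\bar{\mathbb{D}}$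 in $\mathbb{D}$ is a $P_i\in\mathbb{D}\setminus\bar{\mathbb{D}}$ adjacent to some element of $\bar{\mathbb{D}}$. Two preferences $P_i,P_i'\in\mathbb{D}$ are top-connected in $\mathbb{D}$ if there is a path from $P_i$ to $P_i'$ in $\mathbb{D}$ all of whose members have the same top-ranked alternative. The top-connected closure $\mathbb{D}^{TCC}(P_i)$ is the set of preferences in $\mathbb{D}$ top-connected to $P_i$, together with $P_i$. $\mathbb{D}$ is connected with two distinct neighbours if (1) $\mathbb{D}$ is connected, and (2) for every $P_i\in\mathbb{D}$ there exist two neighbours $P_i',P_i''$ of $\mathbb{D}^{TCC}(P_i)$ in $\mathbb{D}$ with $r_1(P_i')\ne r_1(P_i'')$. *)

(* Defs.v *)
From mathcomp Require Import all_boot.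
Set Implicit Arguments. Unset Strict Implicit. Unset Printing Implicit Defensive.

Section Voting.
Variable A : finType.

(* A preference (candidate linear order) is a ranking: P k is the
   alternative ranked (k+1)-th, i.e. r_{k+1}(P) = P k. *)
Definition pref := {ffun 'I_#|A| -> A}.

Definition linear_order (P : pref) : bool := injectiveb P.

Definition is_top (P : pref) (a : A) : bool :=
  [exists k : 'I_#|A|, (val k == 0) && (P k == a)].

Definition same_top (P Q : pref) : bool :=
  [forall a, is_top P a == is_top Q a].

Definition prefers (P : pref) (a b : A) : bool :=
  [exists k : 'I_#|A|, exists l : 'I_#|A|,
     [&& P k == a, P l == b & k < l]].

Definition adjacent (P Q : pref) : bool :=
  [exists k : 'I_#|A|, exists l : 'I_#|A|,
     [&& val l == (val k).+1, Q k == P l, Q l == P k &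
         [forall j, (j != k) && (j != l) ==> (Q j == P j)]]].

Variable D : {set pref}.

Definition minimally_rich : Prop :=
  forall a : A, exists2 P, P \in D & is_top P a.

Definition is_path (P Q : pref) (s : seq pref) : bool :=
  [&& uniq (P :: s), all (mem D) (P :: s), path adjacent P s & last P s == Q].

Definition connected_dom : Prop :=
  forall P Q, P \in D -> Q \in D -> exists s, is_path P Q s.

Definition top_connected (P Q : pref) : Prop :=
  exists s, is_path P Q s && all (same_top P) (P :: s).

Definition TCC (P : pref) : pref -> Prop :=
  fun Q => Q = P \/ (Q \in D /\ top_connected P Q).

Definition neighbour (S : pref -> Prop) (Q : pref) : Prop :=
  Q \in D /\ ~ S Q /\ exists R, S R /\ adjacent R Q.

Definition connected_two_neighbours : Prop :=
  connected_dom /\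
  forall P, P \in D ->
    exists P1 P2, [/\ neighbour (TCC P) P1, neighbour (TCC P) P2 &
                      ~~ same_top P1 P2].

End Voting.

Section SCF.
Variables (A : finType) (n : nat) (D : {set pref A}).

Definition profile := {ffun 'I_n -> pref A}.
Definition in_domain (P : profile) : Prop := forall i, P i \in D.
Definition update (P : profile) (i : 'I_n) (Q : pref A) : profile :=
  [ffun j => if j == i then Q else P j].

Variable f : profile -> A.

Definition unanimous : Prop :=
  forall P a, in_domain P -> (forall i, is_top (P i) a) -> f P = a.

Definition locally_strategy_proof : Prop :=
  forall P i Q, in_domain P -> Q \in D -> adjacent (P i) Q ->
    ~~ prefers (P i) (f (update P i Q)) (f P).

Definition tops_only : Prop :=
  forall P P', in_domain P -> in_domain P' ->
    (forall i, same_top (P i) (P' i)) -> f P = f P'.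

Definition dictatorship : Prop :=
  exists i : 'I_n, forall P, in_domain P -> is_top (P i) (f P).
End SCF.

(* Main.v *)
Require Import Defs.
From mathcomp Require Import all_boot.
From Stdlib Require Import FunctionalExtensionality Classical Lia.
From mathcomp Require Import zify.
Set Implicit Arguments. Unset Strict Implicit. Unset Printing Implicit Defensive.
Lemma connect_ind' (T : finType) (e : rel T) (x : T) (P : T -> Prop) :
  P x -> (forall a b, connect e x a -> e a b -> P a -> P b) ->
  forall y, connect e x y -> P y.
Proof.
move=> Px IH y /connectP [p pp ->].
suff: forall a, connect e x a -> P a -> path e a p -> P (last a p).
  by move=> /(_ x (connect0 _ _) Px pp).
elim: p {pp} => [|b p IHp] a cxa Pa //= /andP [eab pb].
apply: IHp pb; first exact: connect_trans cxa (connect1 eab).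
exact: IH cxa eab Pa.
Qed.

Section Graph.
Variable A : finType.
Variable E : rel A.
Hypothesis Esym : forall a b, E a b -> E b a.
Hypothesis Eirr : forall a, ~~ E a a.
Hypothesis Econn : forall a b, connect E a b.
Hypothesis Edeg : forall a, exists b c, [/\ E a b, E a c & b != c].

Definition ev (v : A) : rel A := fun u w => [&& E u w, u != v & w != v].
Definition conn v := connect (ev v).

Lemma E_neq a b : E a b -> a != b.
Proof. by apply: contraTneq => ->; apply: Eirr. Qed.

Lemma conn_neq v a b : conn v a b -> a != v -> b != v.
Proof.
move=> c av; move: b c; apply: connect_ind' => // x y _.
by case/and3P.
Qed.

Lemma conn1 v a b : E a b -> a != v -> b != v -> conn v a b.
Proof. by move=> eab av bv; apply: connect1; rewrite /ev eab av bv. Qed.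

Lemma conn_trans v a b c : conn v a b -> conn v b c -> conn v a c.
Proof. exact: connect_trans. Qed.

Lemma conn_mono v x a b : (forall c, conn v a c -> c != x) -> conn v a b -> conn x a b.
Proof.
move=> H c; move: b c; apply: connect_ind' => [|a1 a2 c1 e12 c1x].
  exact: connect0.
apply: (conn_trans c1x); have c2 := conn_trans c1 (connect1 e12).
case/and3P: e12 => e12 _ _.
by apply: conn1 => //; [exact: H c1 | exact: H c2].
Qed.

Lemma nbr_in x y : y != x -> exists y1, conn x y y1 /\ E y1 x.
Proof.
move=> yx.
have: conn x y x \/ exists y1, conn x y y1 /\ E y1 x.
  apply: (@connect_ind' _ E y (fun t => conn x y t \/ exists y1, conn x y y1 /\ E y1 x)); last exact: Econn.
    by left; exact: connect0.
  move=> a b _ eab /= [cya|]; last by right.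
  case: (eqVneq b x) => [bx|bx]. subst b. right. exists a. split. exact cya. exact eab.
  left; apply: (conn_trans cya); apply: conn1 => //.
  by apply: contraNneq bx => ax; move: (conn_neq cya yx); rewrite ax eqxx.
case=> // /conn_neq /(_ yx); by rewrite eqxx.
Qed.

Section Voters2.
Variable psi : A -> A -> A.
Hypothesis EC1 : forall y x x', E x x' -> psi x y = psi x' y \/ (psi x y = x /\ psi x' y = x').
Hypothesis EC2 : forall x y y', E y y' -> psi x y = psi x y' \/ (psi x y = y /\ psi x y' = y').

Lemma noself p q : psi p q = p -> psi p p != p -> False.
Proof.
move=> pq pp.
suff: forall t, connect E q t -> psi p t = p by move/(_ p (Econn q p))/eqP; rewrite (negbTE pp).
apply: connect_ind' => // a b _ eab Ha.
case: (EC2 p eab) => [<-//|[h1 h2]].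
have ap : a = p by rewrite -h1 Ha. by subst a; rewrite Ha eqxx in pp.
Qed.

Lemma constZ c : (forall x, psi x x = c) -> forall x y, psi x y = c.
Proof.
move=> diag x y.
suff: forall t, connect E y t -> psi t y = c by apply; exact: Econn.
apply: connect_ind'; first exact: diag.
move=> a b _ eab Ha; case: (EC1 y eab) => [<-//|[h1 h2]].
case: (eqVneq b c) => [bc|bc]; first by rewrite h2 bc.
exfalso; apply: (noself h2); by rewrite diag eq_sym.
Qed.

Hypothesis unan : forall x, psi x x = x.

Lemma L1 x y : E x y -> psi x y = x \/ psi x y = y.
Proof. move=> e; case: (EC1 y e) => [->|[-> _]]; [right; exact: unan | by left]. Qed.

Lemma R1 a b : psi a b = a -> forall b', conn a b b' -> psi a b' = a.
Proof.
move=> h; apply: connect_ind' => // b1 b2 _ /and3P[e b1a _] H.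
case: (EC2 a e) => [<-//|[h1 _]].
by move: b1a; rewrite -h1 H eqxx.
Qed.

Lemma R2 a b : psi a b = b -> forall a', conn b a a' -> psi a' b = b.
Proof.
move=> h; apply: connect_ind' => // a1 a2 _ /and3P[e a1b _] H.
case: (EC1 b e) => [<-//|[h1 _]].
by move: a1b; rewrite -h1 H eqxx.
Qed.

Lemma noveto m : forall x y, #|[set b | conn x y b]| <= m -> y != x ->
  (forall b, conn x y b -> psi x b = x /\ psi b x = x) -> False.
Proof.
elim: m => [|m IH] x y.
  by move=> c _ _; move: c; rewrite leqn0 => /eqP/cards0_eq/setP/(_ y); rewrite !inE /conn connect0.
move=> cK yx veto.
have [y1 [cy1 ey1x]] := nbr_in yx.
have y1x : y1 != x by exact: conn_neq cy1 yx.
have [y' [ey1y' y'x]] : exists y', E y1 y' /\ y' != x.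
  have [b [c [eb ec bc]]] := Edeg y1.
  case: (eqVneq b x) => [bx|bx]; last by exists b.
  by exists c; split => //; rewrite -bx eq_sym.
have y'y1 : y' != y1 by rewrite eq_sym; exact: E_neq.
have cy' : conn x y y' by apply: (conn_trans cy1); exact: conn1.
have [vx1 vx2] := veto _ cy'.
have [vy1 vy2] := veto _ cy1.
have xy' : x != y' by rewrite eq_sym.
case: (L1 ey1y') => h1; last first.
  have := R2 h1 (conn1 ey1x (E_neq ey1y') xy').
  by move=> h; move: xy'; rewrite -{1}vx1 h eqxx.
case: (L1 (Esym ey1y')) => h2.
  have := R1 h2 (conn1 ey1x (E_neq ey1y') xy').
  by move=> h; move: xy'; rewrite -{1}vx2 h eqxx.
have notx : forall c, conn y1 y' c -> c != x.
  move=> c cc; apply/eqP => cx; subst c.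
  have := R1 h1 cc; rewrite vy2 => h; by move: y1x; rewrite h eqxx.
apply: (IH y1 y') => //.
  rewrite -ltnS; apply: leq_trans cK; apply: proper_card; apply/properP; split.
    apply/subsetP => b; rewrite !inE => cb.
    by apply: (conn_trans cy'); apply: conn_mono cb.
  exists y1; rewrite !inE //.
  by apply/negP => /conn_neq /(_ y'y1); rewrite eqxx.
move=> b cb; split; first exact: R1 h1 _ cb.
exact: R2 h2 _ cb.
Qed.

Lemma S4 x y : E x y -> psi x y = x -> psi y x = y.
Proof.
move=> e h; case: (L1 (Esym e)) => // h2; exfalso.
apply: (@noveto #|[set b | conn x y b]| x y) => //.
  by rewrite eq_sym E_neq.
move=> b cb; split; [exact: R1 h _ cb | exact: R2 h2 _ cb].
Qed.

Lemma S5 x y z : E x y -> psi x y = x -> E x z -> psi x z = x.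
Proof.
move=> e h ez; have h2 := S4 e h.
case: (eqVneq z y) => [->//|zy].
have := R1 h2 (conn1 ez (E_neq e) zy) => hz.
case: (EC1 z (Esym e)) => [|[]//].
rewrite hz => hh; case: (L1 ez); rewrite -hh => /eqP.
  by rewrite eq_sym (negbTE (E_neq e)).
by rewrite eq_sym (negbTE zy).
Qed.

Lemma proj1_of_edge x0 y0 : E x0 y0 -> psi x0 y0 = x0 -> forall x y, psi x y = x.
Proof.
move=> e0 h0.
have P : forall v, connect E x0 v -> forall z, E v z -> psi v z = v.
  apply: connect_ind'; first by move=> z; exact: S5 e0 h0.
  move=> a b _ eab Ha z ebz.
  have := S4 eab (Ha _ eab) => hb.
  exact: S5 (Esym eab) hb ebz.
move=> x y.
suff: forall t, connect E x t -> psi x t = x by apply; exact: Econn.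
apply: connect_ind'; first exact: unan.
move=> a b _ eab Ha; case: (EC2 x eab) => [<-//|[h1 h2]].
have ax : a = x by rewrite -h1.
subst a; exact: P (Econn _ _) _ eab.
Qed.
End Voters2.

Lemma two_voter (psi : A -> A -> A) :
  (forall y x x', E x x' -> psi x y = psi x' y \/ (psi x y = x /\ psi x' y = x')) ->
  (forall x y y', E y y' -> psi x y = psi x y' \/ (psi x y = y /\ psi x y' = y')) ->
  (forall x, psi x x = x) ->
  (forall x y, psi x y = x) \/ (forall x y, psi x y = y).
Proof.
move=> EC1 EC2 un.
case: (set_0Vmem [set: A]) => [h0|[a0 _]]; first by left=> x; have := in_setT x; rewrite h0 inE.
have [b [_ [eb _ _]]] := Edeg a0.
case: (@L1 psi EC1 un _ _ eb) => h.
  by left; exact: (@proj1_of_edge psi EC1 EC2 un _ _ eb h).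
right=> x y.
have EC1' : forall y x x', E x x' -> psi y x = psi y x' \/ (psi y x = x /\ psi y x' = x').
  by move=> y0 x0 x1 e; exact: EC2.
have EC2' : forall x y y', E y y' -> psi y x = psi y' x \/ (psi y x = y /\ psi y' x = y').
  by move=> x0 y0 y1 e; exact: EC1.
exact: (@proj1_of_edge (fun x y => psi y x) EC1' EC2' un b a0 (Esym eb) h y x).
Qed.

Section NVoters.
Variable I : finType.
Definition upd (v : I -> A) k a := fun m => if m == k then a else v m.
Definition ECn (g : (I -> A) -> A) := forall v k a a', E a a' ->
  g (upd v k a) = g (upd v k a') \/ (g (upd v k a) = a /\ g (upd v k a') = a').

Lemma upd_same v k a b : upd (upd v k a) k b = upd v k b.
Proof. apply: functional_extensionality => m; rewrite /upd; by case: (m == k). Qed.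

Lemma upd_comm v i j a b : i != j -> upd (upd v i a) j b = upd (upd v j b) i a.
Proof.
move=> ij; apply: functional_extensionality => m; rewrite /upd.
case: (eqVneq m j) => [->|]; last by [].
by rewrite eq_sym (negbTE ij).
Qed.

Lemma upd_id v k : upd v k (v k) = v.
Proof. apply: functional_extensionality => m; rewrite /upd; by case: eqP => [->|]. Qed.

Lemma chain g i j a a' V : ECn g -> i != j -> E a a' ->
  g (upd (upd V i a) j a) = g (upd (upd V i a') j a') \/
  (g (upd (upd V i a) j a) = a /\ g (upd (upd V i a') j a') = a').
Proof.
move=> ec ij e.
have h1 := ec (upd V j a) i a a' e.
have h2 := ec (upd V i a') j a a' e.
rewrite -!(upd_comm _ _ _ ij) in h1.
case: h1 => [e1|[e1 e1']]; case: h2 => [e2|[e2 e2']].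
- by left; rewrite e1 e2.
- by right; rewrite e1 e2 e2'.
- by right; rewrite e1 -e2 e1'.
- by right; rewrite e1 e2'.
Qed.

Lemma reorder v k i j t x y : k != i -> k != j ->
  upd (upd (upd v k t) i x) j y = upd (upd (upd v i x) j y) k t.
Proof.
move=> ki kj; apply: functional_extensionality => m; rewrite /upd.
have [->|mk] := eqVneq m k; first by rewrite (negbTE ki) (negbTE kj).
by case: (m == j); case: (m == i).
Qed.

Theorem nvoter m : forall (S : {set I}) (g : (I -> A) -> A), #|S| = m.+1 -> ECn g ->
  (forall a, g (fun _ => a) = a) ->
  (forall v w, (forall i, i \in S -> v i = w i) -> g v = g w) ->
  exists2 d, d \in S & forall v, g v = v d.
Proof.
elim: m => [|m IH] S g cS ec un dep.
  have /cards1P [i Si] : #|S| == 1 by rewrite cS.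
  exists i; first by rewrite Si set11.
  move=> v; rewrite -(un (v i)); apply: dep => k; by rewrite Si inE => /eqP ->.
have /card_gt1P [i [j [iS jS ij]]] : 1 < #|S| by rewrite cS.
pose sg k := if k == j then i else k.
have sgj k : sg k != j by rewrite /sg; case: (eqVneq k j) => // _; exact: ij.
pose g' (w : I -> A) := g (fun k => w (sg k)).
have cS' : #|S :\ j| = m.+1.
  by move: cS; rewrite (cardsD1 j S) jS add1n => -[].
have ec' : ECn g'.
  move=> v k a a' e; rewrite /g'.
  case: (eqVneq k j) => [kj|kj].
    left; congr g; apply: functional_extensionality => x; rewrite /upd.
    by rewrite kj (negbTE (sgj x)).
  case: (eqVneq k i) => [ki|ki].
    subst k.
    have eq b : (fun x => upd v i b (sg x)) = upd (upd (fun x => v (sg x)) i b) j b.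
      apply: functional_extensionality => x; rewrite /upd /sg.
      by case: (x == j); rewrite ?eqxx.
    rewrite !eq; exact: chain.
  have eq b : (fun x => upd v k b (sg x)) = upd (fun x => v (sg x)) k b.
    apply: functional_extensionality => x; rewrite /upd /sg.
    have [->|xj] := eqVneq x j; last by [].
    by rewrite eq_sym (negbTE ki) eq_sym (negbTE kj).
  rewrite !eq; exact: ec.
have un' : forall a, g' (fun _ => a) = a by move=> a; exact: un.
have dep' : forall v w, (forall k, k \in S :\ j -> v k = w k) -> g' v = g' w.
  move=> v w h; apply: dep => k kS; apply: h.
  rewrite !inE sgj /sg; case: (eqVneq k j) => // _; by [].
have [d dS gd] := IH _ _ cS' ec' un' dep'.
move: dS; rewrite !inE => /andP [dj dS].
pose psi v x y := g (upd (upd v i x) j y).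
have gpsi v : g v = psi v (v i) (v j) by rewrite /psi upd_id upd_id.
have diag v x : psi v x x = g' (upd v i x).
  rewrite /psi /g'; congr g; apply: functional_extensionality => k.
  by rewrite /upd /sg; case: (k == j); rewrite ?eqxx.
have EC1 v : forall y x x', E x x' -> psi v x y = psi v x' y \/ (psi v x y = x /\ psi v x' y = x').
  move=> y x x' e; rewrite /psi !(upd_comm _ _ _ ij); exact: ec.
have EC2 v : forall x y y', E y y' -> psi v x y = psi v x y' \/ (psi v x y = y /\ psi v x y' = y').
  move=> x y y' e; rewrite /psi; exact: ec.
case: (eqVneq d i) => [di|di]; last first.
  exists d => // v; rewrite gpsi; apply: (constZ (EC1 v) (EC2 v)) => x.
  by rewrite diag gd /upd (negbTE di).
subst d.
have un2 v x : psi v x x = x by rewrite diag gd /upd eqxx.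
have tv v := two_voter (EC1 v) (EC2 v) (un2 v).
have P1upd : forall v k b, (forall x y, psi v x y = x) -> (forall x y, psi (upd v k b) x y = x).
  move=> v k b H.
  case: (eqVneq k i) => [->|ki].
    move=> x y; rewrite /psi upd_same; exact: H.
  case: (eqVneq k j) => [->|kj].
    move=> x y; rewrite /psi -(upd_comm _ _ _ ij) upd_same; exact: H.
  suff: forall t, connect E (v k) t -> forall x y, psi (upd v k t) x y = x by apply; exact: Econn.
  apply: connect_ind'; first by rewrite upd_id.
  move=> t1 t2 _ e Ht1.
  case: (tv (upd v k t2)) => // H2; exfalso.
  have h1 := Ht1 t2 t1; have h2 := H2 t2 t1.
  rewrite /psi (reorder v t1 t2 t1 ki kj) in h1; rewrite /psi (reorder v t2 t2 t1 ki kj) in h2.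
  have := ec (upd (upd v i t2) j t1) k t1 t2 e.
  rewrite h1 h2 => -[e1|[e1 _]]; by move: (E_neq e); rewrite e1 eqxx.
have P1all : forall v w, (forall x y, psi v x y = x) -> (forall x y, psi w x y = x).
  move=> v w.
  suff: forall N v, #|[set k | v k != w k]| <= N -> (forall x y, psi v x y = x) -> (forall x y, psi w x y = x).
    by apply.
  elim=> [|N IHN] v0 c H.
    have -> // : w = v0.
    apply: functional_extensionality => z; apply/eqP; rewrite eq_sym; apply/negPn.
    move: c; rewrite leqn0 => /eqP/cards0_eq/setP/(_ z); by rewrite !inE => ->.
  case: (set_0Vmem [set k | v0 k != w k]) => [h0|[k kD]].
    have -> // : w = v0.
    apply: functional_extensionality => z; apply/eqP; rewrite eq_sym; apply/negPn.
    move: h0 => /setP/(_ z); by rewrite !inE => ->.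
  apply: (IHN (upd v0 k (w k))); last exact: P1upd.
  have sub : [set z | upd v0 k (w k) z != w z] \subset [set z | v0 z != w z] :\ k.
    apply/subsetP => z; rewrite !inE /upd.
    by case: (eqVneq z k) => [->|zk] /=; rewrite ?eqxx.
  apply: leq_trans (subset_leq_card sub) _.
  by move: c; rewrite (cardsD1 k) kD add1n ltnS.
case: (classic (exists v, forall x y, psi v x y = y)) => [[v0 H0]|H0].
  exists j => // w; rewrite gpsi; case: (tv w) => Hw; last exact: Hw.
  exfalso; have Hv0 := P1all w v0 Hw.
  have [b [_ [eb _ _]]] := Edeg (v0 i).
  by move: (E_neq eb); rewrite -{1}(Hv0 (v0 i) b) H0 eqxx.
exists i => // w; rewrite gpsi; case: (tv w) => Hw; first exact: Hw.
by exfalso; apply: H0; exists w.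
Qed.
End NVoters.
End Graph.
Section Main.
Variables (A : finType) (n : nat) (D : {set pref A}) (f : profile A n -> A).
Hypothesis hA : 3 <= #|A|.
Hypothesis hlin : forall P, P \in D -> linear_order P.
Hypothesis hrich : minimally_rich D.
Hypothesis hcon : connected_two_neighbours D.

Definition o0 : 'I_#|A| := Ordinal (leq_trans (isT : 1 <= 3) hA).
Definition top (P : pref A) := P o0.

Lemma is_topE P a : is_top P a = (top P == a).
Proof.
apply/existsP/eqP => [[k /andP [k0 /eqP Pk]]|<-].
  rewrite -Pk; have -> : k = o0 by apply: val_inj; rewrite /= (eqP k0).
  by [].
by exists o0; rewrite /top eqxx.
Qed.

Lemma same_topE P Q : same_top P Q = (top P == top Q).
Proof.
apply/forallP/eqP => [H|e a]; last by rewrite !is_topE e.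
case: (eqVneq (top P) (top Q)) => // ne; have := H (top P); by rewrite !is_topE eqxx (eq_sym (top Q)) (negbTE ne).
Qed.

Lemma adjacent_sym P Q : @adjacent A P Q -> @adjacent A Q P.
Proof.
case/existsP => k /existsP [l /and4P [lk Qk Ql /forallP H]].
apply/existsP; exists k; apply/existsP; exists l.
rewrite lk (eqP Qk) (eqP Ql) !eqxx /=; apply/forallP => j; apply/implyP => jj.
by rewrite (eqP (implyP (H j) jj)).
Qed.

Definition E : rel A := fun a b =>
  [exists R in D, exists Q in D, [&& @adjacent A R Q, top R == a, top Q == b & a != b]].

Lemma Esym a b : E a b -> E b a.
Proof.
case/existsP => R /andP [RD /existsP [Q /andP [QD /and4P [adj ra qb ab]]]].
apply/existsP; exists Q; rewrite QD /=; apply/existsP; exists R.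
by rewrite RD adjacent_sym // qb ra eq_sym ab.
Qed.

Lemma Eirr a : ~~ E a a.
Proof.
apply/negP; case/existsP => R /andP [_ /existsP [Q /andP [_ /and4P [_ _ _]]]].
by rewrite eqxx.
Qed.

Lemma path_conn P s : path (@adjacent A) P s -> all (mem D) (P :: s) ->
  connect E (top P) (top (last P s)).
Proof.
elim: s P => [|Q s IH] P /=; first by move=> _ _; exact: connect0.
case/andP => adj ps /and3P [PD QD sD].
apply: connect_trans (IH Q ps _); last by rewrite /= QD.
case: (eqVneq (top P) (top Q)) => [->|ne]; first exact: connect0.
apply: connect1; apply/existsP; exists P; rewrite PD /=; apply/existsP; exists Q.
by rewrite QD adj !eqxx ne.
Qed.

Lemma Econn a b : connect E a b.
Proof.
have [R RD Ra] := hrich a; have [Q QD Qb] := hrich b.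
have [s /and4P [_ sD sp /eqP sl]] := hcon.1 R Q RD QD.
move: Ra Qb; rewrite !is_topE => /eqP <- /eqP <-.
rewrite -sl; exact: path_conn.
Qed.

Lemma nbr_edge P Q : P \in D -> neighbour D (TCC D P) Q -> E (top P) (top Q) /\ top Q != top P.
Proof.
move=> PD [QD [nT [R [TR adj]]]].
have [s [sp sD sT sl]] : exists s, [/\ path (@adjacent A) P s, all (mem D) (P :: s),
    all (same_top P) (P :: s) & last P s = R].
  case: TR => [->|[RD [s /andP [/and4P [_ sD sp /eqP sl] sT]]]].
    by exists [::]; rewrite /= PD same_topE eqxx.
  by exists s.
have RD : R \in D by move/allP: sD => /(_ R); rewrite -sl mem_last; apply.
have tR : top R = top P.
  by move/allP: sT => /(_ R); rewrite -sl mem_last same_topE => /(_ isT) /eqP.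
have ne : top Q != top P.
  apply/negP => /eqP tQ; apply: nT; right; split => //.
  have pth : path (@adjacent A) P (rcons s Q) by rewrite rcons_path sp sl adj.
  have lQ : last P (rcons s Q) = Q by rewrite last_rcons.
  rewrite -[X in top_connected _ _ X]lQ.
  case: (shortenP pth) => s' pth' uq sub.
  exists s'; apply/andP; split; first (apply/and4P; split => //).
  - rewrite /= PD; apply/allP => x /sub; rewrite mem_rcons inE => /orP [/eqP ->//|xs].
    by move/allP: sD; apply; rewrite inE xs orbT.
  - rewrite /= same_topE eqxx; apply/allP => x /sub; rewrite mem_rcons inE => /orP [/eqP ->|xs].
      by rewrite same_topE tQ.
    by move/allP: sT; apply; rewrite inE xs orbT.
split => //.
apply/existsP; exists R; rewrite RD /=; apply/existsP; exists Q.
by rewrite QD adj tR !eqxx eq_sym ne.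
Qed.

Lemma Edeg a : exists b c, [/\ E a b, E a c & b != c].
Proof.
have [P PD Pa] := hrich a; move: Pa; rewrite is_topE => /eqP Pa.
have [P1 [P2 [n1 n2 ns]]] := hcon.2 P PD.
have [e1 _] := nbr_edge PD n1; have [e2 _] := nbr_edge PD n2.
exists (top P1), (top P2); rewrite -Pa; split => //.
by rewrite -same_topE.
Qed.


Lemma nat_key (K L p q p' q' : nat) : L = K.+1 ->
  (p' = K /\ p = L \/ p' = L /\ p = K \/ p' <> K /\ p' <> L /\ p = p') ->
  (q' = K /\ q = L \/ q' = L /\ q = K \/ q' <> K /\ q' <> L /\ q = q') ->
  ~ (q < p) -> ~ (p' < q') -> p <> q -> p = K /\ q = L.
Proof. move=> *. lia. Qed.

Lemma swap_key R Q a a' x y : R \in D -> Q \in D -> @adjacent A R Q -> top R = a -> top Q = a' ->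
  a != a' -> ~~ prefers R y x -> ~~ prefers Q x y -> x = y \/ (x = a /\ y = a').
Proof.
move=> RD QD adj ra qa ne nRyx nQxy.
case: (eqVneq x y) => [->|xy]; [by left | right].
have iR : injective R by apply/injectiveP; exact: hlin.
have iQ : injective Q by apply/injectiveP; exact: hlin.
have ontoR z : exists p, z = R p.
  by apply/codomP; apply: inj_card_onto => //; rewrite card_ord.
have ontoQ z : exists p, z = Q p.
  by apply/codomP; apply: inj_card_onto => //; rewrite card_ord.
have [p xp] := ontoR x; have [q yq] := ontoR y.
have [p' xp'] := ontoQ x; have [q' yq'] := ontoQ y.
case/existsP: adj => k0 /existsP [l0 /and4P [/eqP lk /eqP Qk /eqP Ql /forallP H]].
have rel (u u' : 'I_#|A|) : R u = Q u' ->
    (val u' = val k0 /\ val u = val l0) \/ (val u' = val l0 /\ val u = val k0) \/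
    (val u' <> val k0 /\ val u' <> val l0 /\ val u = val u').
  move=> e.
  case: (eqVneq u' k0) => [uk|uk].
    by left; rewrite uk; split => //; rewrite (iR u l0) // e uk Qk.
  case: (eqVneq u' l0) => [ul|ul].
    by right; left; rewrite ul; split => //; rewrite (iR u k0) // e ul Ql.
  right; right; split; first by move/val_inj/eqP; rewrite (negbTE uk).
  split; first by move/val_inj/eqP; rewrite (negbTE ul).
  have := H u'; rewrite uk ul /= => /eqP Qu.
  by rewrite (iR u u') // e Qu.
have hp := rel p p' (etrans (esym xp) xp').
have hq := rel q q' (etrans (esym yq) yq').
have npq : ~ (val q < val p).
  move=> lt; move: nRyx => /negP; apply; apply/existsP; exists q; apply/existsP; exists p.
  by rewrite -xp -yq !eqxx.
have npq' : ~ (val p' < val q').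
  move=> lt; move: nQxy => /negP; apply; apply/existsP; exists p'; apply/existsP; exists q'.
  by rewrite -xp' -yq' !eqxx.
have pq : val p <> val q by move/val_inj => e; move: xy; rewrite xp yq e eqxx.
have [vp vq] := nat_key lk hp hq npq npq' pq.
have k00 : val k0 = 0.
  case: (eqVneq (val k0) 0) => // nk; exfalso.
  have h0 : (o0 != k0) && (o0 != l0).
    by rewrite -!(inj_eq val_inj) /= lk (eq_sym 0) nk.
  have /eqP e := implyP (H o0) h0.
  by move: ne; rewrite -ra -qa /top e eqxx.
have ek : k0 = o0 by apply: val_inj; rewrite k00.
have pk : p = k0 by apply: val_inj.
have ql : q = l0 by apply: val_inj.
by rewrite xp yq pk ql -Qk ek.
Qed.

Definition tp a := odflt [ffun _ => a] [pick P in D | top P == a].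
Lemma tpP a : tp a \in D /\ top (tp a) = a.
Proof.
rewrite /tp; case: pickP => [P /andP [PD /eqP]|none] //=.
have [P PD] := hrich a; rewrite is_topE => Pa.
by move: (none P); rewrite PD Pa.
Qed.

Definition g (t : 'I_n -> A) : A := f [ffun i => tp (t i)].

Lemma g_in t : in_domain D ([ffun i => tp (t i)] : profile A n).
Proof. by move=> i; rewrite ffunE; exact: (tpP _).1. Qed.

Hypothesis hun : unanimous D f.
Hypothesis htop : tops_only D f.
Hypothesis hlsp : locally_strategy_proof D f.

Lemma f_g P : in_domain D P -> f P = g (fun i => top (P i)).
Proof.
move=> HP; apply: htop => // [|i]; first exact: g_in.
by rewrite ffunE same_topE (tpP _).2 eqxx.
Qed.

Lemma ECg : ECn E g.
Proof.
move=> v k a a' /existsP [R /andP [RD /existsP [Q /andP [QD /and4P [adj /eqP ra /eqP qa ne]]]]].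
pose P0 : profile A n := [ffun i => tp (v i)].
pose PR := update P0 k R. pose PQ := update P0 k Q.
have inR : in_domain D PR.
  move=> i; rewrite /PR /update ffunE; case: (i == k) => //; exact: g_in.
have inQ : in_domain D PQ.
  move=> i; rewrite /PQ /update ffunE; case: (i == k) => //; exact: g_in.
have fR : f PR = g (upd v k a).
  rewrite f_g //; congr g; apply: functional_extensionality => i.
  rewrite /PR /update /upd !ffunE; case: (i == k) => //; exact: (tpP _).2.
have fQ : f PQ = g (upd v k a').
  rewrite f_g //; congr g; apply: functional_extensionality => i.
  rewrite /PQ /update /upd !ffunE; case: (i == k) => //; exact: (tpP _).2.
have uRQ : update PR k Q = PQ.
  by apply/ffunP => i; rewrite /PR /PQ /update !ffunE; case: (i == k).
have uQR : update PQ k R = PR.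
  by apply/ffunP => i; rewrite /PR /PQ /update !ffunE; case: (i == k).
have PRk : PR k = R by rewrite /PR /update ffunE eqxx.
have PQk : PQ k = Q by rewrite /PQ /update ffunE eqxx.
have a1 : @adjacent A (PR k) Q by rewrite PRk.
have a2 : @adjacent A (PQ k) R by rewrite PQk; exact: adjacent_sym.
have h1 := hlsp inR QD a1.
have h2 := hlsp inQ RD a2.
rewrite uRQ PRk in h1; rewrite uQR PQk in h2.
rewrite -fR -fQ; exact: swap_key RD QD adj ra qa ne h1 h2.
Qed.

Lemma dict : 2 <= n -> dictatorship D f.
Proof.
move=> hn.
have cS : #|[set: 'I_n]| = n.-1.+1 by rewrite cardsT card_ord prednK // ltnW.
have un : forall a, g (fun _ => a) = a.
  move=> a; apply: hun; first exact: g_in.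
  by move=> i; rewrite ffunE is_topE (tpP _).2.
have dep : forall v w, (forall i, i \in [set: 'I_n] -> v i = w i) -> g v = g w.
  by move=> v w h; congr g; apply: functional_extensionality => i; apply: h; rewrite inE.
have [d _ hd] := nvoter Esym Eirr Econn Edeg cS ECg un dep.
by exists d => P HP; rewrite is_topE f_g // hd eqxx.
Qed.
End Main.

Theorem proposition1 (A : finType) (n : nat) (D : {set pref A})
    (f : profile A n -> A) :
  3 <= #|A| -> 2 <= n ->
  (forall P, P \in D -> linear_order P) ->
  minimally_rich D -> connected_two_neighbours D ->
  unanimous D f -> tops_only D f -> locally_strategy_proof D f ->
  dictatorship D f.
Proof.
move=> hA hn hlin hrich hcon hun htop hlsp.
exact: (dict hA hlin hrich hcon hun htop hlsp hn).
Qed.
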